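(* Let $n\ge6$ be even, let $\varrho:G_n\to\mathcal L$ be a homomorphism and let $p,q\in\overline{\mathrm B}W$. Then $\mathrm{Area}_n(p,q;\varrho)=\mathrm{Area}_1(\varrho(w_1)q,\,p;\varrho)$.
   Context: Let $W$ be a 2-dimensional complex vector space with a hermitian form $\langle\cdot,\cdot\rangle$ of signature $(+,-)$. In $\mathbb{CP}W$ let $\mathrm BW$ be the negative points (the Poincaré disc, curvature $-1$, oriented by its complex structure), $\mathrm SW$ the isotropic points, $\overline{\mathrm B}W=\mathrm BW\cup\mathrm SW$; $\mathcal L=\mathrm{PU}(W)$ is the group of orientation-preserving isometries of $\mathrm BW$. Oriented triangle area: $\mathrm{Area}\,\Delta(p_1,p_2,p_3)=2\arg(-\langle p_1,p_2\rangle\langle p_2,p_3\rangle\langle p_3,p_1\rangle)$ ($\arg\in[-\pi,\pi]$) if no two vertices are equal isotropic points, $0$ otherwise. $\mathrm{Area}(p_1,\dots,p_m):=\sum_{k=1}^m\mathrm{Area}\,\Delta(c,p_k,p_{k+1})$ (indices mod $m$), independent of $c\in\overline{\mathrm B}W$. $H_n$ is the group generated by $r_1,\dots,r_n$ with relations $r_i^2=1$, $r_n\cdots r_1=1$, indices mod $n$; for even $n$, $G_n\le H_n$ is the index-2 subgroup of words of even length in the $r_i$. $S$ is the automorphism of $H_n$ with $Sr_i=r_{i+1}$ (it preserves $G_n$). Put $v_i:=r_i\cdots r_2r_1$ for $0\le i\le n-1$ ($v_0=1$); for $0\le i\le n-2$ put $w_i:=v_i$ if $i$ is even and $w_i:=v_ir_n$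 if $i$ is odd, and $w_{i+n-1}:=r_nw_ir_n$; indices of the $w_i$ are mod $2n-2$. All $w_i\in G_n$. For $x\in\overline{\mathrm B}W$ write $w_ix$ for $\varrho(w_i)x$. Define $\mathrm{Area}_n(p,q;\varrho):=\mathrm{Area}(w_0p,w_1q,w_2p,w_3q,\dots,w_{2n-4}p,w_{2n-3}q)$ (the $2n-2$ points $w_jx_j$, $x_j=p$ for even $j$, $x_j=q$ for odd $j$), and for $1\le i\le n$, $\mathrm{Area}_i(p,q;\varrho):=\mathrm{Area}_n(p,q;\varrho\circ S^i)$. *)

(* Defs.v *)
From Stdlib Require Import Bool Reals Lra Lia List Relations.
Open Scope bool_scope.
From Coquelicot Require Import Coquelicot.
Import ListNotations.
Open Scope R_scope.

Definition vec := (C * C)%type.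

Definition herm (z w : vec) : C :=
  Cminus (Cmult (fst z) (Cconj (fst w))) (Cmult (snd z) (Cconj (snd w))).

(* the point [v] of CP W lies in closed ball  B W U S W *)
Definition inBbar (v : vec) : Prop := v <> (RtoC 0, RtoC 0) /\ Re (herm v v) <= 0.

Definition isotropicb (v : vec) : bool :=
  if Req_EM_T (Re (herm v v)) 0 then true else false.

(* [u] = [v] in CP W  (u, v nonzero): linear dependence, det(u,v) = 0 *)
Definition proj_eqb (u v : vec) : bool :=
  let d := Cminus (Cmult (fst u) (snd v)) (Cmult (snd u) (fst v)) in
  if Req_EM_T (Re d) 0 then if Req_EM_T (Im d) 0 then true else false else false.

(* principal argument, values in (-PI, PI]; arg 0 = 0 *)
Definition arg (z : C) : R :=
  let x := Re z in let y := Im z in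
  if Rlt_dec 0 x then atan (y / x)
  else if Rlt_dec x 0 then
         (if Rle_dec 0 y then atan (y / x) + PI else atan (y / x) - PI)
  else if Rlt_dec 0 y then PI / 2
  else if Rlt_dec y 0 then - (PI / 2)
  else 0.

Definition eq_iso (u v : vec) : bool := isotropicb u && isotropicb v && proj_eqb u v.

Definition triArea (p1 p2 p3 : vec) : R :=
  if eq_iso p1 p2 || eq_iso p2 p3 || eq_iso p3 p1 then 0
  else 2 * arg (Copp (Cmult (Cmult (herm p1 p2) (herm p2 p3)) (herm p3 p1))).

Definition polyArea (c : vec) (ps : list vec) : R :=
  let m := length ps in
  fold_right Rplus 0
    (map (fun k => triArea c (nth k ps (RtoC 0, RtoC 0)) (nth ((k + 1) mod m)%nat ps (RtoC 0, RtoC 0)))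
         (seq 0 m)).

Record M2 := mkM2 { m11 : C; m12 : C; m21 : C; m22 : C }.

Definition act (A : M2) (v : vec) : vec :=
  (Cplus (Cmult (m11 A) (fst v)) (Cmult (m12 A) (snd v)),
   Cplus (Cmult (m21 A) (fst v)) (Cmult (m22 A) (snd v))).

Definition mmul (A B : M2) : M2 :=
  mkM2 (Cplus (Cmult (m11 A) (m11 B)) (Cmult (m12 A) (m21 B)))
       (Cplus (Cmult (m11 A) (m12 B)) (Cmult (m12 A) (m22 B)))
       (Cplus (Cmult (m21 A) (m11 B)) (Cmult (m22 A) (m21 B)))
       (Cplus (Cmult (m21 A) (m12 B)) (Cmult (m22 A) (m22 B))).

Definition mscale (l : C) (A : M2) : M2 :=
  mkM2 (Cmult l (m11 A)) (Cmult l (m12 A)) (Cmult l (m21 A)) (Cmult l (m22 A)).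

Definition mid : M2 := mkM2 (RtoC 1) (RtoC 0) (RtoC 0) (RtoC 1).

Definition unitaryW (A : M2) : Prop := forall x y, herm (act A x) (act A y) = herm x y.

(* equality in PU(W) = U(W) / scalars *)
Definition peq (A B : M2) : Prop := exists l : C, l <> RtoC 0 /\ A = mscale l B.

(* A word is a list of letters; letter i stands for r_(i mod n) (so r_0 = r_n). *)
Definition word := list nat.

Definition relword (n : nat) : word := rev (seq 1 n).

Inductive Hstep (n : nat) : word -> word -> Prop :=
| Hstep_sq  : forall u v i, Hstep n (u ++ [i; i] ++ v) (u ++ v)
| Hstep_rel : forall u v, Hstep n (u ++ relword n ++ v) (u ++ v)
| Hstep_mod : forall u v i, Hstep n (u ++ [i] ++ v) (u ++ [i mod n] ++ v).

Definition Hequiv (n : nat) : word -> word -> Prop := clos_refl_sym_trans word (Hstep n).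

Definition evenw (w : word) : Prop := Nat.Even (length w).

(* rho : G_n -> PU(W) a homomorphism, given on even-length words by
   matrix lifts in U(W), compatible (up to scalars) with the relations of H_n
   and multiplicative up to scalars. *)
Definition is_Grep (n : nat) (rho : word -> M2) : Prop :=
  (forall w, evenw w -> unitaryW (rho w)) /\
  peq (rho []) mid /\
  (forall u v, evenw u -> evenw v -> peq (rho (u ++ v)) (mmul (rho u) (rho v))) /\
  (forall u v, evenw u -> Hequiv n u v -> peq (rho u) (rho v)).

(* rho o S^i, where S r_j = r_(j+1) *)
Definition rhoS (i : nat) (rho : word -> M2) : word -> M2 :=
  fun w => rho (map (fun j => (j + i)%nat) w).

Definition vword (i : nat) : word := rev (seq 1 i).

Definition wbase (n i : nat) : word :=
  if Nat.even i then vword i else vword i ++ [n].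

Definition wword (n j : nat) : word :=
  let k := (j mod (2 * n - 2))%nat in
  if Nat.leb k (n - 2)%nat then wbase n k else [n] ++ wbase n (k - (n - 1))%nat ++ [n].

Definition Apoints (n : nat) (rho : word -> M2) (p q : vec) : list vec :=
  map (fun j => act (rho (wword n j)) (if Nat.even j then p else q)) (seq 0 (2 * n - 2)%nat).

Definition Area_n (c : vec) (n : nat) (rho : word -> M2) (p q : vec) : R :=
  polyArea c (Apoints n rho p q).

Definition Area_i (c : vec) (i n : nat) (rho : word -> M2) (p q : vec) : R :=
  Area_n c n (rhoS i rho) p q.

(* Main.v *)
Require Import Defs.
From Stdlib Require Import Reals List Lra Lia Bool Relations Arith.
From Coquelicot Require Import Coquelicot.
Import ListNotations.
Open Scope R_scope.

Lemma arg_pos x y : 0 < x -> arg (x, y) = atan (y / x).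
Proof. intros H. unfold arg; simpl. destruct (Rlt_dec 0 x); [reflexivity|lra]. Qed.

Lemma arg_zero x y : x = 0 -> y = 0 -> arg (x, y) = 0.
Proof. intros -> ->. unfold arg; simpl.
  destruct (Rlt_dec 0 0); [lra|]. destruct (Rlt_dec 0 0); [lra|].
  destruct (Rlt_dec 0 0); [lra|]. destruct (Rlt_dec 0 0); [lra|]. reflexivity. Qed.

Lemma arg_scal K x y : 0 < K -> arg (K * x, K * y) = arg (x, y).
Proof.
  intros HK. unfold arg; simpl.
  assert (E: x <> 0 -> K * y / (K * x) = y / x) by (intros; field; lra).
  destruct (Rlt_dec 0 (K*x)); destruct (Rlt_dec 0 x); try (exfalso; nra).
  - rewrite E; lra.
  - destruct (Rlt_dec (K*x) 0); destruct (Rlt_dec x 0); try (exfalso; nra).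
    + rewrite E by lra. destruct (Rle_dec 0 (K*y)); destruct (Rle_dec 0 y); try (exfalso; nra); reflexivity.
    + destruct (Rlt_dec 0 (K*y)); destruct (Rlt_dec 0 y); try (exfalso; nra); try reflexivity.
      destruct (Rlt_dec (K*y) 0); destruct (Rlt_dec y 0); try (exfalso; nra); reflexivity.
Qed.

Lemma arg_conj x y : 0 < x -> arg (x, - y) = - arg (x, y).
Proof. intros H. rewrite !arg_pos by lra. rewrite <- atan_opp. f_equal. field. lra. Qed.

Lemma arg_bound x y : 0 < x -> - (PI/2) < arg (x,y) < PI/2.
Proof. intros H. rewrite arg_pos by lra. pose proof (atan_bound (y/x)). lra. Qed.

Lemma arg_polar_ex x y : 0 < x -> exists r, 0 < r /\ x = r * cos (arg (x,y)) /\ y = r * sin (arg (x,y)).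
Proof.
  intros H. rewrite arg_pos by lra. rewrite cos_atan, sin_atan.
  assert (Hs: 0 < sqrt (1 + (y/x)²)) by (apply sqrt_lt_R0; pose proof (Rle_0_sqr (y/x)); lra).
  exists (x * sqrt (1 + (y/x)²)). split; [nra|]. split; field; repeat split; lra.
Qed.

Lemma arg_polar r s : 0 < r -> - (PI/2) <= s <= PI/2 -> arg (r * cos s, r * sin s) = s.
Proof.
  intros Hr Hs.
  destruct (Req_dec s (PI/2)) as [E|E].
  { subst s. rewrite cos_PI2, sin_PI2. unfold arg; simpl.
    destruct (Rlt_dec 0 (r*0)); [lra|]. destruct (Rlt_dec (r*0) 0); [lra|].
    destruct (Rlt_dec 0 (r*1)); [reflexivity|lra]. }
  destruct (Req_dec s (-(PI/2))) as [E'|E'].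
  { subst s. rewrite cos_neg, sin_neg, cos_PI2, sin_PI2. unfold arg; simpl.
    repeat match goal with |- context [Rlt_dec ?a ?b] => destruct (Rlt_dec a b) end; lra. }
  assert (Hc: 0 < cos s) by (apply cos_gt_0; lra).
  rewrite arg_pos by nra.
  replace (r * sin s / (r * cos s)) with (tan s) by (unfold tan; field; lra).
  apply atan_tan; lra.
Qed.

Definition wv (a b : Complex.C) : Complex.C :=
  (1 - (fst a * fst b + snd a * snd b), fst a * snd b - snd a * fst b).
Definition disk (a : Complex.C) : Prop := fst a * fst a + snd a * snd a <= 1.

Lemma wv_cases a b : disk a -> disk b ->
  0 < fst (wv a b) \/ (a = b /\ fst (wv a b) = 0 /\ snd (wv a b) = 0).
Proof.
  destruct a as [a1 a2], b as [b1 b2]; unfold disk, wv; simpl; intros Ha Hb.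
  destruct (Rlt_dec 0 (1 - (a1 * b1 + a2 * b2))) as [H|H]; [left; exact H|right].
  assert (Hs: (a1-b1)*(a1-b1) + (a2-b2)*(a2-b2) <= 0) by nra.
  pose proof (Rle_0_sqr (a1-b1)); pose proof (Rle_0_sqr (a2-b2)); unfold Rsqr in *.
  assert (X1: (a1-b1)*(a1-b1) = 0) by lra. assert (X2: (a2-b2)*(a2-b2) = 0) by lra.
  apply Rmult_integral in X1; apply Rmult_integral in X2.
  assert (a1 = b1) by (destruct X1; lra). assert (a2 = b2) by (destruct X2; lra). subst.
  split; [reflexivity|]. split; nra.
Qed.

Lemma wv_conj a b : wv b a = (fst (wv a b), - snd (wv a b)).
Proof. destruct a, b; unfold wv; simpl; f_equal; ring. Qed.

Lemma cs_le a1 a2 b1 b2 : a1*b1 + a2*b2 <= sqrt (a1*a1+a2*a2) * sqrt (b1*b1+b2*b2).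
Proof.
  rewrite <- sqrt_mult by nra.
  destruct (Rle_dec (a1*b1+a2*b2) 0). { pose proof (sqrt_pos ((a1*a1+a2*a2)*(b1*b1+b2*b2))). lra. }
  rewrite <- (sqrt_square (a1*b1+a2*b2)) at 1 by lra.
  apply sqrt_le_1_alt. pose proof (Rle_0_sqr (a1*b2-a2*b1)); unfold Rsqr in *. nra.
Qed.

Lemma key_ineq a b c : disk a -> disk b -> disk c ->
  0 <= fst (Cmult (Cmult (wv a b) (wv b c)) (wv c a)).
Proof.
  destruct a as [a1 a2], b as [b1 b2], c as [c1 c2]; unfold disk, wv, Cmult; simpl; intros Ha Hb Hc.
  set (A2 := a1*a1+a2*a2) in *. set (B2 := b1*b1+b2*b2) in *. set (C2 := c1*c1+c2*c2) in *.
  pose proof (cs_le a1 a2 b1 b2) as H1. pose proof (cs_le b1 b2 c1 c2) as H2.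
  pose proof (cs_le c1 c2 a1 a2) as H3. fold A2 B2 C2 in H1, H2, H3.
  set (A := sqrt A2) in *. set (B := sqrt B2) in *. set (C := sqrt C2) in *.
  assert (A0: 0 <= A) by apply sqrt_pos. assert (B0: 0 <= B) by apply sqrt_pos. assert (C0: 0 <= C) by apply sqrt_pos.
  assert (AA: A*A = A2) by (apply sqrt_sqrt; unfold A2; nra).
  assert (BB: B*B = B2) by (apply sqrt_sqrt; unfold B2; nra).
  assert (CC: C*C = C2) by (apply sqrt_sqrt; unfold C2; nra).
  assert (A1: A <= 1) by nra. assert (B1: B <= 1) by nra. assert (C1: C <= 1) by nra.
  match goal with |- 0 <= ?e => assert (E: e = 1 - A2*B2*C2 - (a1*b1+a2*b2)*(1-C2) - (b1*c1+b2*c2)*(1-A2) - (c1*a1+c2*a2)*(1-B2)) end.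
  { unfold A2, B2, C2. ring. }
  rewrite E. clear E.
  assert (P1: 0 <= (A*B - (a1*b1+a2*b2))*(1-C2)) by (apply Rmult_le_pos; nra).
  assert (P2: 0 <= (B*C - (b1*c1+b2*c2))*(1-A2)) by (apply Rmult_le_pos; nra).
  assert (P3: 0 <= (C*A - (c1*a1+c2*a2))*(1-B2)) by (apply Rmult_le_pos; nra).
  assert (P4: 0 <= (1-A*B)*(1-B*C)*(1-C*A)) by (repeat apply Rmult_le_pos; nra).
  rewrite <- AA, <- BB, <- CC in *. nra.
Qed.

Lemma arg3 (w1 w2 w3 : Complex.C) : 0 < fst w1 -> 0 < fst w2 -> 0 < fst w3 ->
  0 <= fst (Cmult (Cmult w1 w2) w3) ->
  arg (Cmult (Cmult w1 w2) w3) = arg w1 + arg w2 + arg w3.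
Proof.
  destruct w1 as [x1 y1], w2 as [x2 y2], w3 as [x3 y3]; intros H1 H2 H3 Hp; simpl in H1, H2, H3.
  pose proof (arg_bound x1 y1 H1). pose proof (arg_bound x2 y2 H2). pose proof (arg_bound x3 y3 H3).
  destruct (arg_polar_ex x1 y1 H1) as (r1 & R1 & E1 & F1).
  destruct (arg_polar_ex x2 y2 H2) as (r2 & R2 & E2 & F2).
  destruct (arg_polar_ex x3 y3 H3) as (r3 & R3 & E3 & F3).
  set (t1 := arg (x1,y1)) in *. set (t2 := arg (x2,y2)) in *. set (t3 := arg (x3,y3)) in *.
  assert (EP: Cmult (Cmult (x1,y1) (x2,y2)) (x3,y3) = ((r1*r2*r3) * cos (t1+t2+t3), (r1*r2*r3) * sin (t1+t2+t3))).
  { rewrite E1, F1, E2, F2, E3, F3. unfold Cmult; simpl. rewrite !cos_plus, !sin_plus. f_equal; rewrite ?cos_plus, ?sin_plus; ring. }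
  rewrite EP in Hp |- *. clear EP. simpl in Hp.
  assert (Rp: 0 < r1*r2*r3) by (repeat apply Rmult_lt_0_compat; lra).
  assert (Hc: 0 <= cos (t1+t2+t3)).
  { destruct (Rle_dec 0 (cos (t1+t2+t3))); [assumption|]. exfalso. nra. }
  apply arg_polar; [exact Rp|]. split.
  - destruct (Rle_dec (-(PI/2)) (t1+t2+t3)); [assumption|]. exfalso.
    assert (cos (-(t1+t2+t3)) < 0) by (apply cos_lt_0; lra). rewrite cos_neg in *. lra.
  - destruct (Rle_dec (t1+t2+t3) (PI/2)); [assumption|]. exfalso.
    assert (cos ((t1+t2+t3)) < 0) by (apply cos_lt_0; lra). lra.
Qed.

Lemma arg_wv_anti a c : disk a -> disk c -> arg (wv a c) + arg (wv c a) = 0.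
Proof.
  intros Ha Hc. rewrite (wv_conj a c). destruct (wv_cases a c Ha Hc) as [H|[_ [H1 H2]]];
  destruct (wv a c) as [x y]; simpl in *.
  - rewrite arg_conj by lra. lra.
  - rewrite !arg_zero by lra. lra.
Qed.

Lemma core_zero a c : disk a -> disk c -> fst (wv a a) = 0 -> snd (wv a a) = 0 ->
  arg (Cmult (Cmult (wv a a) (wv a c)) (wv c a)) = arg (wv a a) + arg (wv a c) + arg (wv c a).
Proof.
  intros Ha Hc H1 H2. pose proof (arg_wv_anti a c Ha Hc).
  destruct (wv a a) as [x y]; simpl in H1, H2; subst.
  rewrite (arg_zero 0 0) by reflexivity.
  destruct (wv a c) as [x1 y1], (wv c a) as [x2 y2].
  unfold Cmult; simpl. rewrite arg_zero by ring. lra.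
Qed.

Lemma prod_rot (w1 w2 w3 : Complex.C) : Cmult (Cmult w1 w2) w3 = Cmult (Cmult w2 w3) w1.
Proof. destruct w1, w2, w3; unfold Cmult; simpl; f_equal; ring. Qed.

Lemma core a b c : disk a -> disk b -> disk c ->
  arg (Cmult (Cmult (wv a b) (wv b c)) (wv c a)) = arg (wv a b) + arg (wv b c) + arg (wv c a).
Proof.
  intros Ha Hb Hc.
  destruct (wv_cases a b Ha Hb) as [P1|[E1 [Z1 Z1']]].
  2:{ subst b. apply core_zero; assumption. }
  destruct (wv_cases b c Hb Hc) as [P2|[E2 [Z2 Z2']]].
  2:{ subst c. rewrite prod_rot. rewrite core_zero by assumption. lra. }
  destruct (wv_cases c a Hc Ha) as [P3|[E3 [Z3 Z3']]].
  2:{ subst a. rewrite prod_rot, prod_rot. rewrite core_zero by assumption. lra. }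
  apply arg3; try assumption. apply key_ineq; assumption.
Qed.

Definition dd (v : vec) : R := fst (snd v) * fst (snd v) + snd (snd v) * snd (snd v).
Definition nrm (v : vec) : Complex.C :=
  ((fst (fst v) * fst (snd v) + snd (fst v) * snd (snd v)) / dd v,
   (snd (fst v) * fst (snd v) - fst (fst v) * snd (snd v)) / dd v).
Definition phi (x y : vec) : R := arg (wv (nrm x) (nrm y)).

Lemma bbar_d v : inBbar v -> 0 < dd v.
Proof.
  destruct v as [[x1 y1] [x2 y2]]; unfold inBbar, dd, herm, Cminus, Cplus, Copp, Cmult, Cconj, Re; simpl.
  intros [Hn Hr].
  destruct (Rlt_dec 0 (x2*x2+y2*y2)) as [H|H]; [exact H|exfalso].
  assert (x2 = 0) by nra. assert (y2 = 0) by nra. assert (x1 = 0) by nra. assert (y1 = 0) by nra. subst.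
  apply Hn. reflexivity.
Qed.

Lemma bbar_disk v : inBbar v -> disk (nrm v).
Proof.
  intros H. pose proof (bbar_d v H) as Hd. revert H Hd.
  destruct v as [[x1 y1] [x2 y2]]; unfold inBbar, disk, nrm, dd, herm, Cminus, Cplus, Copp, Cmult, Cconj, Re; simpl.
  intros [_ Hr] Hd.
  match goal with |- ?e <= 1 => replace e with ((x1*x1+y1*y1)/(x2*x2+y2*y2)) by (field; lra) end.
  apply Rmult_le_reg_r with (x2*x2+y2*y2); [lra|]. unfold Rdiv. rewrite Rmult_assoc, Rinv_l by lra. nra.
Qed.

Lemma nrm_decomp v : inBbar v -> v = (Cmult (nrm v) (snd v), snd v).
Proof.
  intros H. pose proof (bbar_d v H) as Hd. revert Hd.
  destruct v as [[x1 y1] [x2 y2]]; unfold nrm, dd, Cmult; simpl. intros Hd.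
  f_equal. f_equal; field; lra.
Qed.

Lemma prod_id a b c s t u :
  Copp (Cmult (Cmult (herm (Cmult a s, s) (Cmult b t, t)) (herm (Cmult b t, t) (Cmult c u, u)))
              (herm (Cmult c u, u) (Cmult a s, s)))
  = ((dd (a,s) * dd (b,t) * dd (c,u)) * fst (Cmult (Cmult (wv a b) (wv b c)) (wv c a)),
     (dd (a,s) * dd (b,t) * dd (c,u)) * snd (Cmult (Cmult (wv a b) (wv b c)) (wv c a))).
Proof.
  destruct a as [a1 a2], b as [b1 b2], c as [c1 c2], s as [s1 s2], t as [t1 t2], u as [u1 u2].
  unfold herm, dd, wv, Cminus, Cplus, Copp, Cmult, Cconj; simpl. f_equal; ring.
Qed.

Lemma cmul_zero_inv (z w : Complex.C) : 0 < fst z * fst z + snd z * snd z ->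
  fst (Cmult z w) = 0 -> snd (Cmult z w) = 0 -> fst w = 0 /\ snd w = 0.
Proof.
  destruct z as [z1 z2], w as [w1 w2]; unfold Cmult; simpl; intros Hz H1 H2.
  assert (E1: (z1*z1+z2*z2)*w1 = 0) by (replace ((z1*z1+z2*z2)*w1) with (z1*(z1*w1-z2*w2) + z2*(z1*w2+z2*w1)) by ring; rewrite H1, H2; ring).
  assert (E2: (z1*z1+z2*z2)*w2 = 0) by (replace ((z1*z1+z2*z2)*w2) with (z1*(z1*w2+z2*w1) - z2*(z1*w1-z2*w2)) by ring; rewrite H1, H2; ring).
  apply Rmult_integral in E1; apply Rmult_integral in E2. split; [destruct E1|destruct E2]; lra.
Qed.

Lemma eqiso_abs a s b t : 0 < dd (a,s) -> 0 < dd (b,t) ->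
  Re (herm (Cmult a s, s) (Cmult a s, s)) = 0 ->
  Re (Cminus (Cmult (Cmult a s) t) (Cmult s (Cmult b t))) = 0 ->
  Im (Cminus (Cmult (Cmult a s) t) (Cmult s (Cmult b t))) = 0 ->
  fst (wv a b) = 0 /\ snd (wv a b) = 0.
Proof.
  intros Hs Ht Hh Hd1 Hd2.
  assert (Hst: 0 < fst (Cmult s t) * fst (Cmult s t) + snd (Cmult s t) * snd (Cmult s t)).
  { revert Hs Ht. destruct s as [s1 s2], t as [t1 t2]; unfold dd, Cmult; simpl; intros.
    replace ((s1 * t1 - s2 * t2) * (s1 * t1 - s2 * t2) + (s1 * t2 + s2 * t1) * (s1 * t2 + s2 * t1))
      with ((s1*s1+s2*s2)*(t1*t1+t2*t2)) by ring. nra. }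
  destruct (cmul_zero_inv (Cmult s t) (Cminus a b) Hst) as [E1 E2].
  { revert Hd1. destruct a, b, s, t; unfold Re, Cminus, Cplus, Copp, Cmult; simpl. intros H; rewrite <- H; ring. }
  { revert Hd2. destruct a, b, s, t; unfold Im, Cminus, Cplus, Copp, Cmult; simpl. intros H; rewrite <- H; ring. }
  revert Hs Hh E1 E2. destruct a as [a1 a2], b as [b1 b2], s as [s1 s2];
  unfold dd, herm, Re, wv, Cminus, Cplus, Copp, Cmult, Cconj; simpl. intros Hs Hh E1 E2.
  assert (b1 = a1) by lra. assert (b2 = a2) by lra. subst.
  assert (E: (s1*s1+s2*s2)*(a1*a1+a2*a2 - 1) = 0) by (rewrite <- Hh; ring).
  apply Rmult_integral in E. destruct E as [E|E]; [lra|]. split; lra.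
Qed.

Lemma eqiso_zero x y : inBbar x -> inBbar y -> eq_iso x y = true ->
  fst (wv (nrm x) (nrm y)) = 0 /\ snd (wv (nrm x) (nrm y)) = 0.
Proof.
  intros Hx Hy H. unfold eq_iso in H. apply andb_prop in H as [H Hp]. apply andb_prop in H as [Hix Hiy].
  unfold isotropicb in Hix. destruct (Req_EM_T (Re (herm x x)) 0) as [Hh|]; [|discriminate].
  unfold proj_eqb in Hp. destruct (Req_EM_T _ 0) as [Hd1|]; [|discriminate].
  destruct (Req_EM_T _ 0) as [Hd2|]; [|discriminate].
  pose proof (bbar_d x Hx) as Dx. pose proof (bbar_d y Hy) as Dy.
  pose proof (nrm_decomp x Hx) as Ex. pose proof (nrm_decomp y Hy) as Ey.
  rewrite Ex in Hh, Dx, Hd1, Hd2. rewrite Ey in Dy, Hd1, Hd2. simpl in Hd1, Hd2.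
  apply (eqiso_abs (nrm x) (snd x) (nrm y) (snd y)); assumption.
Qed.

Lemma TA x y z : inBbar x -> inBbar y -> inBbar z ->
  triArea x y z = 2 * (phi x y + phi y z + phi z x).
Proof.
  intros Hx Hy Hz. unfold phi. rewrite <- core by (apply bbar_disk; assumption).
  pose proof (bbar_d x Hx) as Dx. pose proof (bbar_d y Hy) as Dy. pose proof (bbar_d z Hz) as Dz.
  unfold triArea.
  destruct (eq_iso x y || eq_iso y z || eq_iso z x) eqn:E.
  - rewrite (surjective_pairing (Cmult (Cmult _ _) _)), arg_zero; [ring| |].
    + apply orb_prop in E as [E|E]; [apply orb_prop in E as [E|E]|].
      * destruct (eqiso_zero x y Hx Hy E) as [Z1 Z2].
        destruct (wv (nrm x) (nrm y)), (wv (nrm y) (nrm z)), (wv (nrm z) (nrm x)); simpl in *; subst; ring.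
      * destruct (eqiso_zero y z Hy Hz E) as [Z1 Z2].
        destruct (wv (nrm x) (nrm y)), (wv (nrm y) (nrm z)), (wv (nrm z) (nrm x)); simpl in *; subst; ring.
      * destruct (eqiso_zero z x Hz Hx E) as [Z1 Z2].
        destruct (wv (nrm x) (nrm y)), (wv (nrm y) (nrm z)), (wv (nrm z) (nrm x)); simpl in *; subst; ring.
    + apply orb_prop in E as [E|E]; [apply orb_prop in E as [E|E]|].
      * destruct (eqiso_zero x y Hx Hy E) as [Z1 Z2].
        destruct (wv (nrm x) (nrm y)), (wv (nrm y) (nrm z)), (wv (nrm z) (nrm x)); simpl in *; subst; ring.
      * destruct (eqiso_zero y z Hy Hz E) as [Z1 Z2].
        destruct (wv (nrm x) (nrm y)), (wv (nrm y) (nrm z)), (wv (nrm z) (nrm x)); simpl in *; subst; ring.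
      * destruct (eqiso_zero z x Hz Hx E) as [Z1 Z2].
        destruct (wv (nrm x) (nrm y)), (wv (nrm y) (nrm z)), (wv (nrm z) (nrm x)); simpl in *; subst; ring.
  - pose proof (prod_id (nrm x) (nrm y) (nrm z) (snd x) (snd y) (snd z)) as P.
    rewrite <- (nrm_decomp x Hx), <- (nrm_decomp y Hy), <- (nrm_decomp z Hz) in P.
    rewrite P. f_equal. rewrite arg_scal.
    + destruct (Cmult _ _); reflexivity.
    + assert (D: forall v, inBbar v -> dd (nrm v, snd v) = dd v) by (intros; reflexivity).
      rewrite !D by assumption. repeat apply Rmult_lt_0_compat; assumption.
Qed.

Lemma phi_anti x y : inBbar x -> inBbar y -> phi x y + phi y x = 0.
Proof. intros Hx Hy. unfold phi. apply arg_wv_anti; apply bbar_disk; assumption. Qed.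

Lemma argprod x y z : inBbar x -> inBbar y -> inBbar z ->
  arg (Copp (Cmult (Cmult (herm x y) (herm y z)) (herm z x))) = arg (Cmult (Cmult (wv (nrm x) (nrm y)) (wv (nrm y) (nrm z))) (wv (nrm z) (nrm x))).
Proof.
  intros Hx Hy Hz.
  pose proof (bbar_d x Hx) as Dx. pose proof (bbar_d y Hy) as Dy. pose proof (bbar_d z Hz) as Dz.
  pose proof (prod_id (nrm x) (nrm y) (nrm z) (snd x) (snd y) (snd z)) as P.
  rewrite <- (nrm_decomp x Hx), <- (nrm_decomp y Hy), <- (nrm_decomp z Hz) in P.
  rewrite P. rewrite arg_scal.
  + destruct (Cmult _ _); reflexivity.
  + assert (D: forall v, inBbar v -> dd (nrm v, snd v) = dd v) by (intros; reflexivity).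
    rewrite !D by assumption. repeat apply Rmult_lt_0_compat; assumption.
Qed.

Lemma TA2 x y z : inBbar x -> inBbar y -> inBbar z ->
  triArea x y z = 2 * arg (Copp (Cmult (Cmult (herm x y) (herm y z)) (herm z x))).
Proof.
  intros Hx Hy Hz. rewrite TA, argprod by assumption. unfold phi. rewrite core by (apply bbar_disk; assumption). ring.
Qed.

Lemma herm_zero_l w : herm (RtoC 0, RtoC 0) w = RtoC 0.
Proof. destruct w as [[a b] [c d]]; unfold herm, RtoC, Cminus, Cplus, Copp, Cmult, Cconj; simpl; f_equal; ring. Qed.

Lemma nonzero_of_herm x : (forall y, herm x y = RtoC 0) -> x = (RtoC 0, RtoC 0).
Proof.
  intros H. pose proof (H (RtoC 1, RtoC 0)) as H1. pose proof (H (RtoC 0, RtoC 1)) as H2.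
  destruct x as [[a b] [c d]]; unfold herm, RtoC, Cminus, Cplus, Copp, Cmult, Cconj in *; simpl in *.
  injection H1; injection H2; intros. f_equal; f_equal; lra.
Qed.

Lemma bbar_act A x : unitaryW A -> inBbar x -> inBbar (act A x).
Proof.
  intros HA [Hn Hr]. split.
  - intros E. apply Hn. apply nonzero_of_herm. intros y. rewrite <- (HA x y), E. apply herm_zero_l.
  - rewrite HA. exact Hr.
Qed.

Lemma TA_act A x y z : unitaryW A -> inBbar x -> inBbar y -> inBbar z ->
  triArea (act A x) (act A y) (act A z) = triArea x y z.
Proof. intros HA Hx Hy Hz. rewrite !TA2 by (try apply bbar_act; assumption). rewrite !HA. reflexivity. Qed.

Definition sumk (f : nat -> R) (m : nat) : R := fold_right Rplus 0 (map f (seq 0 m)).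

Lemma sumk_0 f : sumk f 0 = 0.
Proof. reflexivity. Qed.

Lemma sumk_S f m : sumk f (S m) = sumk f m + f m.
Proof. unfold sumk. rewrite seq_S, map_app, fold_right_app. simpl.
  generalize (map f (seq 0 m)). intros l. induction l; simpl; [ring|]. rewrite IHl. ring. Qed.

Lemma sumk_ext f g m : (forall k, (k < m)%nat -> f k = g k) -> sumk f m = sumk g m.
Proof. induction m; intros H; [reflexivity|]. rewrite !sumk_S, IHm; [f_equal; apply H; lia|intros; apply H; lia]. Qed.

Lemma sumk_plus f g m : sumk (fun k => f k + g k) m = sumk f m + sumk g m.
Proof. induction m; [rewrite !sumk_0; ring|]. rewrite !sumk_S, IHm. ring. Qed.

Lemma sumk_scal c f m : sumk (fun k => c * f k) m = c * sumk f m.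
Proof. induction m; [rewrite !sumk_0; ring|]. rewrite !sumk_S, IHm. ring. Qed.

Lemma sumk_add f a b : sumk f (a + b) = sumk f a + sumk (fun k => f (a + k)%nat) b.
Proof. induction b; [rewrite Nat.add_0_r, sumk_0; ring|].
  rewrite Nat.add_succ_r, !sumk_S, IHb. ring. Qed.

Lemma sumk_shift f m : sumk f (S m) = f 0%nat + sumk (fun k => f (S k)) m.
Proof. replace (S m) with (1 + m)%nat by lia. rewrite sumk_add. unfold sumk at 1; simpl. ring. Qed.

Lemma sumk_rot g m : sumk (fun k => g ((k + 1) mod m)%nat) m = sumk g m.
Proof.
  destruct m as [|m]; [reflexivity|].
  rewrite sumk_S, sumk_shift. replace ((m + 1) mod S m)%nat with 0%nat.
  2:{ replace (m+1)%nat with (S m) by lia. rewrite Nat.mod_same; lia. }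
  rewrite (sumk_ext _ (fun k => g (S k))). { ring. }
  intros k Hk. f_equal. rewrite Nat.mod_small; lia.
Qed.

Definition vz : vec := (RtoC 0, RtoC 0).

Lemma nth_mapseq (F : nat -> vec) m k : (k < m)%nat -> nth k (map F (seq 0 m)) vz = F k.
Proof.
  intros Hk. rewrite nth_indep with (d' := F 0%nat) by (rewrite length_map, length_seq; lia).
  rewrite map_nth, seq_nth by lia. reflexivity.
Qed.

Lemma polyArea_map c F m : inBbar c -> (forall k, (k < m)%nat -> inBbar (F k)) ->
  polyArea c (map F (seq 0 m)) = 2 * sumk (fun k => phi (F k) (F ((k+1) mod m)%nat)) m.
Proof.
  intros Hc HF. destruct m as [|m']; [unfold polyArea, sumk; simpl; ring|].
  set (m := S m').
  assert (Hm: (0 < m)%nat) by (unfold m; lia).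
  unfold polyArea. rewrite length_map, length_seq. fold (sumk (fun k => triArea c (nth k (map F (seq 0 m)) (RtoC 0, RtoC 0))
       (nth ((k + 1) mod m) (map F (seq 0 m)) (RtoC 0, RtoC 0))) m).
  assert (Hlt: forall k, ((k+1) mod m < m)%nat) by (intros; apply Nat.mod_upper_bound; lia).
  rewrite (sumk_ext _ (fun k => 2 * (phi c (F k) + phi (F k) (F ((k+1) mod m)%nat) - phi c (F ((k+1) mod m)%nat)))).
  2:{ intros k Hk. change (RtoC 0, RtoC 0) with vz. rewrite !nth_mapseq by auto.
      rewrite TA by auto. pose proof (phi_anti (F ((k+1) mod m)%nat) c (HF _ (Hlt k)) Hc). lra. }
  rewrite sumk_scal. f_equal.
  rewrite (sumk_ext _ (fun k => (phi c (F k) + phi (F k) (F ((k+1) mod m)%nat)) + (-1) * phi c (F ((k+1) mod m)%nat))) by (intros; ring).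
  rewrite sumk_plus, sumk_plus, sumk_scal.
  rewrite (sumk_rot (fun k => phi c (F k))). ring.
Qed.

Definition c0 : vec := (RtoC 0, RtoC 1).
Lemma c0_bbar : inBbar c0.
Proof. unfold inBbar, c0, herm, RtoC, Re, Cminus, Cplus, Copp, Cmult, Cconj; simpl. split.
  - intros H. injection H. intros. lra.
  - lra. Qed.

Lemma iso_sum A F m : unitaryW A -> (forall k, (k < m)%nat -> inBbar (F k)) ->
  sumk (fun k => phi (act A (F k)) (act A (F ((k+1) mod m)%nat))) m =
  sumk (fun k => phi (F k) (F ((k+1) mod m)%nat)) m.
Proof.
  intros HA HF. destruct m as [|m']; [reflexivity|]. set (m := S m').
  assert (Hlt: forall k, ((k+1) mod m < m)%nat) by (intros; apply Nat.mod_upper_bound; unfold m; lia).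
  assert (E: polyArea (act A c0) (map (fun k => act A (F k)) (seq 0 m)) = polyArea c0 (map F (seq 0 m))).
  { unfold polyArea. rewrite !length_map, !length_seq. f_equal. apply map_ext_in. intros k Hk.
    apply in_seq in Hk. change (RtoC 0, RtoC 0) with vz. rewrite !nth_mapseq by (auto; lia).
    apply TA_act; auto using c0_bbar. apply HF; lia. }
  rewrite !polyArea_map in E; auto using c0_bbar, bbar_act. lra.
Qed.

Definition cscale (l : Complex.C) (v : vec) : vec := (Cmult l (fst v), Cmult l (snd v)).
Definition pe (u v : vec) : Prop := exists l, l <> RtoC 0 /\ u = cscale l v.

Lemma cnz (l : Complex.C) : l <> RtoC 0 -> 0 < fst l * fst l + snd l * snd l.
Proof. destruct l as [a b]; unfold RtoC; simpl; intros H.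
  destruct (Rlt_dec 0 (a*a+b*b)) as [h|h]; [exact h|]. exfalso. apply H.
  assert (a = 0) by nra. assert (b = 0) by nra. subst; reflexivity. Qed.

Lemma nrm_scale l x : l <> RtoC 0 -> 0 < dd x -> nrm (cscale l x) = nrm x.
Proof.
  intros Hl Hd. pose proof (cnz l Hl) as HL. revert Hd HL.
  destruct l as [l1 l2], x as [[x1 y1] [x2 y2]]; unfold nrm, dd, cscale, Cmult; simpl. intros Hd HL.
  set (L := l1*l1+l2*l2) in *.
  assert (DD: (l1 * x2 - l2 * y2) * (l1 * x2 - l2 * y2) + (l1 * y2 + l2 * x2) * (l1 * y2 + l2 * x2) = L * (x2*x2+y2*y2)) by (unfold L; ring).
  assert (N1: (l1 * x1 - l2 * y1) * (l1 * x2 - l2 * y2) + (l1 * y1 + l2 * x1) * (l1 * y2 + l2 * x2) = L * (x1*x2+y1*y2)) by (unfold L; ring).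
  assert (N2: (l1 * y1 + l2 * x1) * (l1 * x2 - l2 * y2) - (l1 * x1 - l2 * y1) * (l1 * y2 + l2 * x2) = L * (y1*x2-x1*y2)) by (unfold L; ring).
  rewrite DD, N1, N2. f_equal; field; lra.
Qed.

Lemma dd_scale l x : l <> RtoC 0 -> 0 < dd x -> 0 < dd (cscale l x).
Proof.
  intros Hl Hd. pose proof (cnz l Hl) as HL. revert Hd HL.
  destruct l as [l1 l2], x as [[x1 y1] [x2 y2]]; unfold dd, cscale, Cmult; simpl. intros Hd HL.
  replace ((l1 * x2 - l2 * y2) * (l1 * x2 - l2 * y2) + (l1 * y2 + l2 * x2) * (l1 * y2 + l2 * x2)) with
    ((l1*l1+l2*l2) * (x2*x2+y2*y2)) by ring. nra.
Qed.

Lemma bbar_scale l x : l <> RtoC 0 -> inBbar x -> inBbar (cscale l x).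
Proof.
  intros Hl Hx. pose proof (cnz l Hl) as HL. pose proof (dd_scale l x Hl (bbar_d x Hx)) as D.
  destruct Hx as [_ Hr]. revert HL D Hr.
  destruct l as [l1 l2], x as [[x1 y1] [x2 y2]]; unfold inBbar, dd, herm, Re, cscale, Cminus, Cplus, Copp, Cmult, Cconj, RtoC; simpl.
  intros HL D Hr. split.
  - intros E. injection E. intros. nra.
  - match goal with |- ?e <= 0 => replace e with ((l1*l1+l2*l2) * (x1 * x1 - - y1 * y1 + - (x2 * x2 - - y2 * y2))) by ring end.
    nra.
Qed.

Lemma phi_pe x x' y y' : pe x x' -> pe y y' -> inBbar x' -> inBbar y' -> phi x y = phi x' y'.
Proof.
  intros [l [Hl ->]] [m [Hm ->]] Hx Hy. unfold phi.
  rewrite !nrm_scale by (auto using bbar_d). reflexivity.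
Qed.

Lemma bbar_pe x x' : pe x x' -> inBbar x' -> inBbar x.
Proof. intros [l [Hl ->]] H. apply bbar_scale; auto. Qed.

Lemma pe_refl x : pe x x.
Proof. exists (RtoC 1). split. { unfold RtoC; intros E; injection E; lra. }
  destruct x as [[a b] [c d]]; unfold cscale, Cmult, RtoC; simpl; f_equal; f_equal; ring. Qed.

Lemma pe_trans x y z : pe x y -> pe y z -> pe x z.
Proof.
  intros [l [Hl ->]] [m [Hm ->]]. exists (Cmult l m). split.
  - pose proof (cnz l Hl). pose proof (cnz m Hm). destruct l as [a b], m as [c d]; unfold RtoC, Cmult in *; simpl in *.
    intros E. injection E. intros E1 E2.
    assert (Z: (a*a+b*b)*(c*c+d*d) = (a*c-b*d)*(a*c-b*d) + (a*d+b*c)*(a*d+b*c)) by ring.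
    rewrite E1, E2 in Z. nra.
  - destruct z as [[z1 z2] [z3 z4]], l, m; unfold cscale, Cmult; simpl; f_equal; f_equal; ring.
Qed.

Lemma pe_sym x y : pe x y -> pe y x.
Proof.
  intros [l [Hl ->]]. pose proof (cnz l Hl) as HL.
  exists ((fst l / (fst l * fst l + snd l * snd l)), (- snd l / (fst l * fst l + snd l * snd l))). split.
  - unfold RtoC. intros E. injection E. intros E1 E2. destruct l as [a b]; simpl in *.
    assert (a = 0). { apply (Rmult_eq_reg_r (/ (a*a+b*b))). 2: apply Rgt_not_eq, Rinv_0_lt_compat; lra. rewrite Rmult_0_l. exact E2. }
    assert (b = 0). { apply (Rmult_eq_reg_r (/ (a*a+b*b))). 2: apply Rgt_not_eq, Rinv_0_lt_compat; lra. rewrite Rmult_0_l. lra. }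
    subst. lra.
  - revert HL. destruct y as [[z1 z2] [z3 z4]], l as [a b]; unfold cscale, Cmult; simpl. intros HL.
    f_equal; f_equal; field; lra.
Qed.

Lemma pe_act A x y : pe x y -> pe (act A x) (act A y).
Proof.
  intros [l [Hl ->]]. exists l. split; [exact Hl|].
  destruct A as [a b c d], y as [[y1 y2] [y3 y4]], l as [l1 l2], a, b, c, d; unfold act, cscale, Cmult, Cplus; simpl; f_equal; f_equal; ring.
Qed.

Lemma act_mmul A B x : act (mmul A B) x = act A (act B x).
Proof. destruct A as [a b c d], B as [a5 a6 a7 a8], x as [[x1 x2] [x3 x4]], a, b, c, d, a5, a6, a7, a8;
  unfold act, mmul, Cmult, Cplus; simpl; f_equal; f_equal; ring. Qed.

Lemma act_mscale l A x : act (mscale l A) x = cscale l (act A x).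
Proof. destruct A as [a b c d], x as [[x1 x2] [x3 x4]], a, b, c, d, l;
  unfold act, mscale, cscale, Cmult, Cplus; simpl; f_equal; f_equal; ring. Qed.

Lemma act_mid x : act mid x = x.
Proof. destruct x as [[x1 x2] [x3 x4]]; unfold act, mid, RtoC, Cmult, Cplus; simpl; f_equal; f_equal; ring. Qed.

Lemma peq_pe A B x : peq A B -> pe (act A x) (act B x).
Proof. intros [l [Hl ->]]. rewrite act_mscale. exists l. auto. Qed.

Section Rep.
Variable n : nat.
Variable rho : word -> M2.
Hypothesis Hr : is_Grep n rho.

Lemma G1 u v x : evenw u -> evenw v -> pe (act (rho (u ++ v)) x) (act (rho u) (act (rho v) x)).
Proof. intros Hu Hv. destruct Hr as (_ & _ & H & _). rewrite <- act_mmul. apply peq_pe, H; auto. Qed.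

Lemma G2 u v x : evenw u -> Hequiv n u v -> pe (act (rho u) x) (act (rho v) x).
Proof. intros Hu Hv. destruct Hr as (_ & _ & _ & H). apply peq_pe, H; auto. Qed.

Lemma G3 x : pe (act (rho []) x) x.
Proof. destruct Hr as (_ & H & _ & _). rewrite <- (act_mid x) at 2. apply peq_pe, H. Qed.

Lemma G0 w x : evenw w -> inBbar x -> inBbar (act (rho w) x).
Proof. intros Hw Hx. destruct Hr as (H & _). apply bbar_act; auto. Qed.
End Rep.
Close Scope R_scope.

Section W.
Variable n : nat.

Lemma Hstep_ctx u v x y : Hstep n x y -> Hstep n (u ++ x ++ v) (u ++ y ++ v).
Proof.
  intros H; destruct H as [u' v' i|u' v'|u' v' i].
  - replace (u ++ (u' ++ [i; i] ++ v') ++ v) with ((u ++ u') ++ [i;i] ++ (v' ++ v)) by (rewrite !app_assoc; reflexivity).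
    replace (u ++ (u' ++ v') ++ v) with ((u ++ u') ++ (v' ++ v)) by (rewrite !app_assoc; reflexivity). constructor.
  - replace (u ++ (u' ++ relword n ++ v') ++ v) with ((u ++ u') ++ relword n ++ (v' ++ v)) by (rewrite !app_assoc; reflexivity).
    replace (u ++ (u' ++ v') ++ v) with ((u ++ u') ++ (v' ++ v)) by (rewrite !app_assoc; reflexivity). constructor.
  - replace (u ++ (u' ++ [i] ++ v') ++ v) with ((u ++ u') ++ [i] ++ (v' ++ v)) by (rewrite !app_assoc; reflexivity).
    replace (u ++ (u' ++ [i mod n] ++ v') ++ v) with ((u ++ u') ++ [i mod n] ++ (v' ++ v)) by (rewrite !app_assoc; reflexivity). constructor.
Qed.

Lemma Hctx u v x y : Hequiv n x y -> Hequiv n (u ++ x ++ v) (u ++ y ++ v).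
Proof.
  intros H. induction H.
  - apply rst_step. apply Hstep_ctx. assumption.
  - apply rst_refl.
  - apply rst_sym. assumption.
  - eapply rst_trans; eassumption.
Qed.

Lemma Htrans x y z : Hequiv n x y -> Hequiv n y z -> Hequiv n x z.
Proof. apply rst_trans. Qed.
Lemma Hsym x y : Hequiv n x y -> Hequiv n y x.
Proof. apply rst_sym. Qed.
Lemma Hrefl x : Hequiv n x x.
Proof. apply rst_refl. Qed.

Lemma Hs u v i : Hequiv n (u ++ i :: i :: v) (u ++ v).
Proof. apply rst_step. exact (Hstep_sq n u v i). Qed.

Lemma Hm1 u v : (2 <= n)%nat -> Hequiv n (u ++ (n+1) :: v) (u ++ 1 :: v).
Proof.
  intros Hn. apply rst_step.
  replace (u ++ 1 :: v) with (u ++ [(n+1) mod n] ++ v).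
  - exact (Hstep_mod n u v (n+1)).
  - replace ((n+1) mod n)%nat with 1%nat; [reflexivity|].
    replace (n+1)%nat with (1 + 1 * n)%nat by lia. rewrite Nat.Div0.mod_add. rewrite Nat.mod_small; lia.
Qed.

Definition sV (i : nat) : word := map (fun j => (j + 1)%nat) (vword i).

Lemma VS i : vword (S i) = sV i ++ [1%nat].
Proof.
  unfold sV, vword. simpl. rewrite map_rev. f_equal.
  rewrite <- seq_shift. f_equal. apply map_ext. intros; lia.
Qed.

Lemma VS' i : vword (S i) = S i :: vword i.
Proof. unfold vword. rewrite seq_S. rewrite rev_app_distr. simpl. reflexivity. Qed.

Lemma length_vword i : length (vword i) = i.
Proof. unfold vword. rewrite length_rev, length_seq. reflexivity. Qed.

Lemma Vrel : (1 <= n)%nat -> Hequiv n (vword (n - 1)) [n].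
Proof.
  intros Hn.
  eapply Htrans. { apply Hsym. apply (Hs [] (vword (n-1)) n). }
  simpl. replace (n :: n :: vword (n-1)) with ([n] ++ relword n ++ []).
  2:{ assert (R: relword n = n :: vword (n-1)).
      { unfold relword. change (rev (seq 1 n)) with (vword n). destruct n as [|m]; [lia|].
        rewrite VS'. simpl. rewrite Nat.sub_0_r. reflexivity. }
      rewrite R, app_nil_r. reflexivity. }
  replace [n] with ([n] ++ [] ++ []) at 2 by reflexivity.
  apply rst_step. constructor.
Qed.
End W.
Open Scope R_scope.

Lemma ev2 j : Nat.even (2*j) = true.
Proof. replace (2*j)%nat with (0 + 2*j)%nat by lia. rewrite Nat.even_add_mul_2. reflexivity. Qed.
Lemma od2 j : Nat.even (2*j+1) = false.
Proof. replace (2*j+1)%nat with (1 + 2*j)%nat by lia. rewrite Nat.even_add_mul_2. reflexivity. Qed.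

Section Claims.
Variable n m : nat.
Hypothesis Hm : n = (2 * m)%nat.
Hypothesis H6 : (3 <= m)%nat.
Variable rho : word -> M2.
Hypothesis Hr : is_Grep n rho.
Variables p q : vec.
Hypothesis Hp : inBbar p.
Hypothesis Hq : inBbar q.

Lemma W_lo k : (k <= n - 2)%nat -> wword n k = wbase n k.
Proof. intros H. unfold wword. rewrite Nat.mod_small by lia.
  replace (k <=? n-2)%nat with true by (symmetry; apply Nat.leb_le; lia). reflexivity. Qed.

Lemma W_hi k : (n - 1 <= k <= 2*n - 3)%nat -> wword n k = [n] ++ wbase n (k - (n-1)) ++ [n].
Proof. intros H. unfold wword. rewrite Nat.mod_small by lia.
  replace (k <=? n-2)%nat with false by (symmetry; apply Nat.leb_gt; lia). reflexivity. Qed.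

Lemma wb_even j : wbase n (2*j) = vword (2*j).
Proof. unfold wbase. rewrite ev2. reflexivity. Qed.
Lemma wb_odd j : wbase n (2*j+1) = vword (2*j+1) ++ [n].
Proof. unfold wbase. rewrite od2. reflexivity. Qed.

Lemma even_len_wbase i : Nat.Even (length (wbase n i)).
Proof. destruct (Nat.Even_or_Odd i) as [[j ->]|[j ->]].
  - rewrite wb_even, length_vword. exists j; reflexivity.
  - rewrite wb_odd, length_app, length_vword. simpl. exists (S j). lia. Qed.

Lemma ev_wword k : evenw (wword n k).
Proof. unfold evenw, wword. destruct (_ <=? _)%nat.
  - apply even_len_wbase.
  - rewrite !length_app. destruct (even_len_wbase (k mod (2*n-2) - (n-1))) as [j Hj].
    rewrite Hj. simpl. exists (S j). lia. Qed.

Lemma ev_map w : evenw w -> evenw (map (fun j => (j+1)%nat) w).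
Proof. unfold evenw. rewrite length_map. auto. Qed.

Lemma w1 : wword n 1 = [1%nat; n].
Proof. rewrite W_lo by lia. replace 1%nat with (2*0+1)%nat by lia. rewrite wb_odd. reflexivity. Qed.

Definition G := rho (wword n 1).
Definition P k := act (rho (wword n k)) (if Nat.even k then p else q).
Definition Q k := act (rho (map (fun j => (j+1)%nat) (wword n k))) (if Nat.even k then act G q else p).

Lemma bb_G x : inBbar x -> inBbar (act G x).
Proof. intros. apply (G0 n rho Hr); auto using ev_wword. Qed.
Lemma bb_P k : inBbar (P k).
Proof. unfold P. apply (G0 n rho Hr); [apply ev_wword|]. destruct (Nat.even k); auto. Qed.
Lemma bb_Q k : inBbar (Q k).
Proof. unfold Q. apply (G0 n rho Hr); [apply ev_map, ev_wword|]. destruct (Nat.even k); auto using bb_G. Qed.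

Lemma Lc u v x : evenw u -> evenw v -> pe (act (rho u) (act (rho v) x)) (act (rho (u ++ v)) x).
Proof. intros. apply pe_sym. apply (G1 n rho Hr); auto. Qed.
Lemma Le u v x : evenw u -> Hequiv n u v -> pe (act (rho u) x) (act (rho v) x).
Proof. intros. apply (G2 n rho Hr); auto. Qed.

Lemma ev_sV i : Nat.Even i -> evenw (sV i).
Proof. unfold evenw, sV. rewrite length_map, length_vword. auto. Qed.

Lemma evw_len w : Nat.Even (length w) -> evenw w.
Proof. auto. Qed.

Ltac evl := apply evw_len; try unfold sV; rewrite ?length_app, ?length_map, ?length_vword; simpl.

Lemma n2 : (2 <= n)%nat.
Proof. lia. Qed.

Lemma C1 k : (k <= n - 2)%nat -> pe (Q k) (P (k+1)).
Proof.
  intros Hk. unfold Q, P. rewrite (W_lo k) by lia.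
  destruct (Nat.Even_or_Odd k) as [[j ->]|[j ->]].
  - rewrite ev2, wb_even. rewrite od2. unfold G.
    eapply pe_trans. { apply Lc; [apply ev_map; evl; exists j; lia| apply ev_wword]. }
    rewrite w1. fold (sV (2*j)).
    destruct (Nat.eq_dec (2*j) (n-2)) as [E|E].
    + rewrite W_hi by lia. replace (2*j+1 - (n-1))%nat with (2*0)%nat by lia. rewrite wb_even.
      apply Le. { evl. exists (S j). lia. }
      replace (sV (2*j) ++ [1%nat; n]) with ([] ++ vword (n-1) ++ [n]).
      2:{ replace (n-1)%nat with (S (2*j)) by lia. rewrite VS. rewrite <- app_assoc. reflexivity. }
      replace ([n] ++ vword (2*0) ++ [n]) with ([] ++ [n] ++ [n]) by reflexivity.
      apply Hctx. apply Vrel. lia.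
    + rewrite W_lo by lia. rewrite wb_odd. replace (2*j+1)%nat with (S (2*j)) by lia. rewrite VS.
      rewrite <- app_assoc. apply pe_refl.
  - rewrite od2, wb_odd. replace (2*j+1+1)%nat with (2*(j+1))%nat by lia. rewrite ev2.
    assert (Hk2: (2*j+1 <= n-3)%nat) by lia.
    rewrite W_lo by lia. rewrite wb_even.
    replace (2*(j+1))%nat with (S (2*j+1)) by lia. rewrite VS.
    rewrite map_app. fold (sV (2*j+1)). simpl map.
    apply Le. { evl. exists (S j). lia. }
    replace (sV (2*j+1) ++ [n+1]%nat) with (sV (2*j+1) ++ (n+1)%nat :: []) by reflexivity.
    apply Hm1. lia.
Qed.

Lemma C3 : pe (P (n-1)) q.
Proof.
  unfold P. rewrite (W_hi (n-1)) by lia. replace (n-1-(n-1))%nat with (2*0)%nat by lia. rewrite wb_even.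
  replace (Nat.even (n-1)) with false by (replace (n-1)%nat with (2*(m-1)+1)%nat by lia; rewrite od2; reflexivity).
  eapply pe_trans; [|apply (G3 n rho Hr)].
  apply Le. { evl. exists 1%nat. lia. }
  change ([n] ++ vword (2*0) ++ [n]) with ([] ++ n :: n :: []). apply Hs.
Qed.

Lemma C6 : pe (P 0) p.
Proof.
  unfold P. rewrite (W_lo 0) by lia. change 0%nat with (2*0)%nat. rewrite wb_even. simpl. apply (G3 n rho Hr).
Qed.

Lemma C5 : pe (act G (P n)) p.
Proof.
  unfold P. rewrite (W_hi n) by lia. replace (n-(n-1))%nat with (2*0+1)%nat by lia. rewrite wb_odd.
  replace (Nat.even n) with true by (rewrite Hm, ev2; reflexivity).
  unfold G. eapply pe_trans. { apply Lc; [apply ev_wword|]. evl. exists 2%nat. lia. }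
  eapply pe_trans; [|apply (G3 n rho Hr)].
  rewrite w1. apply Le. { evl. exists 3%nat. lia. }
  change ([1%nat; n] ++ [n] ++ (vword (2 * 0 + 1) ++ [n]) ++ [n]) with ([1%nat] ++ n :: n :: [1%nat; n; n]).
  eapply Htrans; [apply Hs|]. change ([1%nat] ++ [1%nat; n; n]) with ([] ++ 1%nat :: 1%nat :: [n; n]).
  eapply Htrans; [apply Hs|]. change ([] ++ [n; n]) with ([] ++ n :: n :: []). apply Hs.
Qed.

Lemma wword_mod k : wword n (k mod (2*n-2)) = wword n k.
Proof. unfold wword. rewrite Nat.Div0.mod_mod. reflexivity. Qed.

Lemma even_mod k : Nat.even (k mod (2*n-2)) = Nat.even k.
Proof.
  rewrite (Nat.div_mod_eq k (2*n-2)) at 2.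
  replace ((2 * n - 2) * (k / (2 * n - 2)) + k mod (2 * n - 2))%nat
    with (k mod (2*n-2) + 2 * ((n-1) * (k / (2*n-2))))%nat.
  - rewrite Nat.even_add_mul_2. reflexivity.
  - replace (2*n-2)%nat with (2*(n-1))%nat by lia. ring.
Qed.

Lemma P_mod k : P (k mod (2*n-2)) = P k.
Proof. unfold P. rewrite wword_mod, even_mod. reflexivity. Qed.
Lemma Q_mod k : Q (k mod (2*n-2)) = Q k.
Proof. unfold Q. rewrite wword_mod, even_mod. reflexivity. Qed.

Lemma C2e j : (2*j <= n-2)%nat -> pe (Q (n-1+2*j)) (act G (P (n-1+2*j+1))).
Proof.
  intros Hj. unfold Q, P. rewrite (W_hi (n-1+2*j)) by lia.
  replace (n-1+2*j-(n-1))%nat with (2*j)%nat by lia. rewrite wb_even.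
  replace (Nat.even (n-1+2*j)) with false by (replace (n-1+2*j)%nat with (2*(m-1+j)+1)%nat by lia; rewrite od2; reflexivity).
  replace (Nat.even (n-1+2*j+1)) with true by (replace (n-1+2*j+1)%nat with (2*(m+j))%nat by lia; rewrite ev2; reflexivity).
  rewrite !map_app. fold (sV (2*j)). simpl map.
  assert (L1: Hequiv n ([(n+1)%nat] ++ sV (2*j) ++ [(n+1)%nat]) ([1%nat] ++ vword (2*j+1))).
  { change ([(n+1)%nat] ++ sV (2*j) ++ [(n+1)%nat]) with ([] ++ (n+1)%nat :: (sV (2*j) ++ [(n+1)%nat])).
    eapply Htrans; [apply Hm1; lia|].
    change ([] ++ 1%nat :: sV (2*j) ++ [(n+1)%nat]) with ((1%nat :: sV (2*j)) ++ (n+1)%nat :: []).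
    eapply Htrans; [apply Hm1; lia|].
    replace (2*j+1)%nat with (S (2*j)) by lia. rewrite VS. apply Hrefl. }
  destruct (Nat.eq_dec (2*j) (n-2)) as [E|E].
  - replace (n-1+2*j+1)%nat with (2*n-2)%nat by lia.
    unfold wword. rewrite Nat.Div0.mod_same. simpl (0 <=? n-2)%nat.
    change (wbase n 0) with (wbase n (2*0)). rewrite wb_even. simpl vword.
    eapply pe_trans with (act (rho (wword n 1)) p).
    + apply Le. { evl. exists (S j). lia. }
      eapply Htrans; [exact L1|]. rewrite w1.
      replace (2*j+1)%nat with (n-1)%nat by lia.
      replace ([1%nat] ++ vword (n-1)) with ([1%nat] ++ vword (n-1) ++ []) by (rewrite app_nil_r; reflexivity).
      change [1%nat; n] with ([1%nat] ++ [n] ++ []). apply Hctx. apply Vrel. lia.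
    + unfold G. apply pe_act. apply pe_sym. apply (G3 n rho Hr).
  - rewrite (W_hi (n-1+2*j+1)) by lia. replace (n-1+2*j+1-(n-1))%nat with (2*j+1)%nat by lia. rewrite wb_odd.
    eapply pe_trans with (act (rho ([1%nat] ++ vword (2*j+1))) p).
    + apply Le; [evl; exists (S j); lia|exact L1].
    + apply pe_sym. unfold G. eapply pe_trans. { apply Lc; [apply ev_wword|]. evl. exists (j+2)%nat. lia. }
      rewrite w1. apply Le. { evl. exists (j+3)%nat. lia. }
      change ([1%nat; n] ++ [n] ++ (vword (2 * j + 1) ++ [n]) ++ [n]) with ([1%nat] ++ n :: n :: ((vword (2 * j + 1) ++ [n]) ++ [n])).
      eapply Htrans; [apply Hs|]. rewrite <- app_assoc.
      change ([1%nat] ++ vword (2 * j + 1) ++ [n] ++ [n]) with ((1%nat :: vword (2 * j + 1)) ++ n :: n :: []).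
      eapply Htrans; [apply Hs|]. rewrite app_nil_r. apply Hrefl.
Qed.

Lemma C2o j : (2*j+1 <= n-3)%nat -> pe (Q (n-1+(2*j+1))) (act G (P (n-1+(2*j+1)+1))).
Proof.
  intros Hj. unfold Q, P. rewrite (W_hi (n-1+(2*j+1))) by lia.
  replace (n-1+(2*j+1)-(n-1))%nat with (2*j+1)%nat by lia. rewrite wb_odd.
  rewrite (W_hi (n-1+(2*j+1)+1)) by lia.
  replace (n-1+(2*j+1)+1-(n-1))%nat with (2*(j+1))%nat by lia. rewrite wb_even.
  replace (Nat.even (n-1+(2*j+1))) with true by (replace (n-1+(2*j+1))%nat with (2*(m+j))%nat by lia; rewrite ev2; reflexivity).
  replace (Nat.even (n-1+(2*j+1)+1)) with false by (replace (n-1+(2*j+1)+1)%nat with (2*(m+j)+1)%nat by lia; rewrite od2; reflexivity).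
  rewrite !map_app. fold (sV (2*j+1)). simpl map.
  unfold G. eapply pe_trans. { apply Lc; [|apply ev_wword]. evl. exists (j+2)%nat. lia. }
  apply pe_sym. eapply pe_trans. { apply Lc; [apply ev_wword|]. evl. exists (j+2)%nat. lia. }
  rewrite w1. eapply pe_trans with (act (rho ([1%nat] ++ vword (2*(j+1)) ++ [n])) q).
  - apply Le. { evl. exists (j+3)%nat. lia. }
    change ([1%nat; n] ++ [n] ++ vword (2 * (j + 1)) ++ [n]) with ([1%nat] ++ n :: n :: (vword (2 * (j + 1)) ++ [n])).
    apply Hs.
  - apply Le. { evl. exists (j+2)%nat. lia. } apply Hsym.
    replace (2*(j+1))%nat with (S (2*j+1)) by lia. rewrite VS.
    replace (([(n + 1)%nat] ++ (sV (2 * j + 1) ++ [(n + 1)%nat]) ++ [(n + 1)%nat]) ++ [1%nat; n])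
      with (((n+1)%nat :: sV (2*j+1)) ++ (n+1)%nat :: (n+1)%nat :: [1%nat; n]) by (simpl; rewrite <- !app_assoc; reflexivity).
    eapply Htrans; [apply Hs|].
    change (((n + 1)%nat :: sV (2 * j + 1)) ++ [1%nat; n]) with ([] ++ (n+1)%nat :: (sV (2 * j + 1) ++ [1%nat; n])).
    eapply Htrans; [apply Hm1; lia|]. simpl. rewrite <- app_assoc. apply Hrefl.
Qed.

Lemma C2 k : (n - 1 <= k <= 2*n-3)%nat -> pe (Q k) (act G (P (k+1))).
Proof.
  intros Hk. destruct (Nat.Even_or_Odd (k - (n-1))) as [[j Ej]|[j Ej]].
  - replace k with (n-1+2*j)%nat by lia. apply C2e. lia.
  - replace k with (n-1+(2*j+1))%nat by lia. apply C2o. lia.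
Qed.

Lemma sumk_1 f : sumk f 1 = f 0%nat.
Proof. unfold sumk. simpl. ring. Qed.

Lemma phiE x x' y y' : pe x x' -> pe y y' -> inBbar x' -> inBbar y' -> phi x y = phi x' y'.
Proof. apply phi_pe. Qed.

Lemma main : sumk (fun k => phi (P k) (P (k+1))) (2*n-2) = sumk (fun k => phi (Q k) (Q (k+1))) (2*n-2).
Proof.
  assert (HG: unitaryW G). { unfold G. destruct Hr as [H _]. apply H, ev_wword. }
  set (SPA := sumk (fun j => phi (P (j+1)) (P (j+2))) (n-2)).
  set (SPB := sumk (fun j => phi (P (n+j)) (P (n+j+1))) (n-2)).
  set (SGB := sumk (fun j => phi (act G (P (n+j))) (act G (P (n+j+1)))) (n-2)).
  assert (EP: sumk (fun k => phi (P k) (P (k+1))) (2*n-2) = phi (P 0) (P 1) + SPA + phi (P (n-1)) (P n) + SPB).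
  { replace (2*n-2)%nat with (1 + ((n-2) + (1 + (n-2))))%nat by lia.
    rewrite !sumk_add, !sumk_1. unfold SPA, SPB.
    rewrite (sumk_ext (fun k => phi (P (1 + k)) (P (1 + k + 1))) (fun j => phi (P (j + 1)) (P (j + 2)))) by (intros; f_equal; f_equal; lia).
    rewrite (sumk_ext (fun k => phi (P (1 + (n - 2 + (1 + k)))) (P (1 + (n - 2 + (1 + k)) + 1))) (fun j => phi (P (n + j)) (P (n + j + 1)))) by (intros; f_equal; f_equal; lia).
    replace (1 + (n - 2 + 0))%nat with (n-1)%nat by lia. replace (n-1+1)%nat with n by lia. change (0+1)%nat with 1%nat. lra. }
  assert (EQ: sumk (fun k => phi (Q k) (Q (k+1))) (2*n-2) = SPA + phi (P (n-1)) (P 0) + SGB + phi (act G (P 0)) (P 1)).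
  { replace (2*n-2)%nat with ((n-2) + (1 + ((n-2) + 1)))%nat by lia.
    rewrite !sumk_add, !sumk_1. unfold SPA, SGB.
    rewrite (sumk_ext (fun k => phi (Q k) (Q (k+1))) (fun j => phi (P (j+1)) (P (j+2)))).
    2:{ intros k Hk. apply phiE; try apply bb_P. apply C1; lia. replace (k+2)%nat with (k+1+1)%nat by lia. apply C1; lia. }
    rewrite (sumk_ext (fun k => phi (Q (n-2+(1+k))) (Q (n-2+(1+k)+1))) (fun j => phi (act G (P (n+j))) (act G (P (n+j+1))))).
    2:{ intros k Hk. apply phiE; try apply bb_G, bb_P.
        - replace (n+k)%nat with (n-2+(1+k)+1)%nat by lia. apply C2; lia.
        - replace (n+k+1)%nat with (n-2+(1+k)+1+1)%nat by lia. apply C2; lia. }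
    rewrite Nat.add_0_r.
    assert (T1: phi (Q (n-2)) (Q (n-2+1)) = phi (P (n-1)) (P 0)).
    { apply phiE; try apply bb_P.
      - replace (n-1)%nat with (n-2+1)%nat by lia. apply C1; lia.
      - eapply pe_trans. { apply C2; lia. } replace (n-2+1+1)%nat with n by lia.
        eapply pe_trans. { apply C5. } apply pe_sym, C6. }
    assert (T2: phi (Q (n-2+(1+(n-2)))) (Q (n-2+(1+(n-2))+1)) = phi (act G (P 0)) (P 1)).
    { apply phiE; try apply bb_P; try apply bb_G, bb_P.
      - replace (P 0) with (P (n-2+(1+(n-2))+1)).
        + apply C2; lia.
        + rewrite <- (P_mod (n-2+(1+(n-2))+1)). f_equal.
          replace (n-2+(1+(n-2))+1)%nat with (2*n-2)%nat by lia. rewrite Nat.Div0.mod_same. reflexivity.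
      - rewrite <- (Q_mod (n-2+(1+(n-2))+1)). replace ((n-2+(1+(n-2))+1) mod (2*n-2))%nat with 0%nat.
        + apply C1; lia.
        + replace (n-2+(1+(n-2))+1)%nat with (2*n-2)%nat by lia. rewrite Nat.Div0.mod_same. reflexivity. }
    rewrite T1, T2. ring. }
  set (Rf := fun k => if (k <? n-1)%nat then P (n+k) else P (n-1)).
  assert (HRb: forall k, (k < n)%nat -> inBbar (Rf k)) by (intros; unfold Rf; destruct (_ <? _)%nat; apply bb_P).
  pose proof (iso_sum G Rf n HG HRb) as ISO.
  assert (RD: forall (F : vec -> vec), (forall x, inBbar x -> inBbar (F x)) ->
     sumk (fun k => phi (F (Rf k)) (F (Rf ((k+1) mod n)%nat))) n =
     sumk (fun j => phi (F (P (n+j))) (F (P (n+j+1)))) (n-2) + phi (F (P 0)) (F (P (n-1))) + phi (F (P (n-1))) (F (P n))).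
  { intros F HF. match goal with |- sumk ?f n = _ => replace (sumk f n) with (sumk f ((n-2)+(1+1))) by (f_equal; lia) end.
    rewrite !sumk_add, !sumk_1.
    rewrite (sumk_ext _ (fun j => phi (F (P (n+j))) (F (P (n+j+1))))).
    2:{ intros k Hk. unfold Rf. rewrite Nat.mod_small by lia.
        replace (k <? n-1)%nat with true by (symmetry; apply Nat.ltb_lt; lia).
        replace (k+1 <? n-1)%nat with true by (symmetry; apply Nat.ltb_lt; lia). rewrite Nat.add_assoc. reflexivity. }
    replace (n - 2 + 0)%nat with (n-2)%nat by lia. replace (n-2+(1+0))%nat with (n-1)%nat by lia.
    replace ((n-2+1) mod n)%nat with (n-1)%nat by (rewrite Nat.mod_small; lia).
    replace ((n-1+1) mod n)%nat with 0%nat by (replace (n-1+1)%nat with n by lia; rewrite Nat.Div0.mod_same; reflexivity).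
    unfold Rf.
    replace (n-2 <? n-1)%nat with true by (symmetry; apply Nat.ltb_lt; lia).
    replace (n-1 <? n-1)%nat with false by (symmetry; apply Nat.ltb_ge; lia).
    replace (0 <? n-1)%nat with true by (symmetry; apply Nat.ltb_lt; lia).
    replace (P (n + (n-2))%nat) with (P 0) by (rewrite <- (P_mod (n+(n-2))); f_equal; replace (n+(n-2))%nat with (2*n-2)%nat by lia; rewrite Nat.Div0.mod_same; reflexivity).
    rewrite Nat.add_0_r. lra. }
  rewrite (RD (act G)) in ISO by (auto using bb_G).
  pose proof (RD (fun x => x) (fun x H => H)) as R2. simpl in R2. rewrite R2 in ISO.
  fold SGB SPB in ISO.
  assert (X1: phi (act G (P 0)) (act G (P (n-1))) = phi (act G (P 0)) (P 1)).
  { apply phiE; auto using pe_refl, bb_G, bb_P. eapply pe_trans. { apply pe_act. apply C3. } unfold P. simpl Nat.even. apply pe_refl. }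
  assert (X2: phi (act G (P (n-1))) (act G (P n)) = phi (P 1) (P 0)).
  { apply phiE; auto using bb_P.
    - eapply pe_trans. { apply pe_act. apply C3. } unfold P. simpl Nat.even. apply pe_refl.
    - eapply pe_trans. { apply C5. } apply pe_sym, C6. }
  rewrite X1, X2 in ISO.
  pose proof (phi_anti (P (n-1)) (P 0) (bb_P _) (bb_P _)).
  pose proof (phi_anti (P 1) (P 0) (bb_P _) (bb_P _)).
  rewrite EP, EQ. lra.
Qed.
End Claims.

Theorem lemma5p5 :
  forall (n : nat), Nat.Even n -> (6 <= n)%nat ->
  forall rho : word -> M2, is_Grep n rho ->
  forall p q : vec, inBbar p -> inBbar q ->
  forall c c' : vec, inBbar c -> inBbar c' ->
    Area_n c n rho p q = Area_i c' 1 n rho (act (rho (wword n 1)) q) p.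
Proof.
  intros n [m Hm] H6 rho Hr p q Hp Hq c c' Hc Hc'.
  assert (Hm3 : (3 <= m)%nat) by lia.
  unfold Area_i, Area_n, Apoints.
  change (map (fun j => act (rho (wword n j)) (if Nat.even j then p else q)) (seq 0 (2*n-2)))
    with (map (P n rho p q) (seq 0 (2*n-2))).
  change (map (fun j => act (rhoS 1 rho (wword n j)) (if Nat.even j then act (rho (wword n 1)) q else p)) (seq 0 (2*n-2)))
    with (map (Q n rho p q) (seq 0 (2*n-2))).
  rewrite !polyArea_map; auto.
  2:{ intros; eapply bb_Q; eauto. }
  2:{ intros; eapply bb_P; eauto. }
  rewrite (sumk_ext (fun k => phi (P n rho p q k) (P n rho p q ((k + 1) mod (2 * n - 2)))) (fun k => phi (P n rho p q k) (P n rho p q (k+1))))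
    by (intros; rewrite (P_mod n m Hm Hm3); reflexivity).
  rewrite (sumk_ext (fun k => phi (Q n rho p q k) (Q n rho p q ((k + 1) mod (2 * n - 2)))) (fun k => phi (Q n rho p q k) (Q n rho p q (k+1))))
    by (intros; rewrite (Q_mod n m Hm Hm3); reflexivity).
  f_equal. apply (main n m Hm Hm3 rho Hr p q Hp Hq).
Qed.
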